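(* Let $n_r \ge 1$ and let $\mathcal{Q}^a \subseteq \mathbb{C}^{n_r}$ be a set of (angular channel) vectors. For $\boldsymbol{v}\in\mathbb{C}^{n_r}$ let its support vector $\boldsymbol{v}_s\in\{0,1\}^{n_r}$ be defined by $v_{s,i}=1$ if $v_i\neq 0$ and $v_{s,i}=0$ if $v_i=0$, and let $\mathcal{Q}^a_s=\{\boldsymbol{q}_s : \boldsymbol{q}\in\mathcal{Q}^a\}\subseteq\{0,1\}^{n_r}$. Assume $\mathcal{Q}^a_s$ satisfies the inclusion property: whenever $\boldsymbol{a}\in\mathcal{Q}^a_s$ and $\boldsymbol{b}\in\{0,1\}^{n_r}$ has its set of nonzero indices contained in that of $\boldsymbol{a}$, then $\boldsymbol{b}\in\mathcal{Q}^a_s$. Let $\boldsymbol{G}\in\{0,1\}^{m\times n_r}$ be a binary matrix such that the linear encoding map $\boldsymbol{s}\mapsto \boldsymbol{G}\boldsymbol{s}$ computed over $\mathbb{F}_2$ is injective on $\mathcal{Q}^a_s$. Regard $\boldsymbol{G}$ as a complex matrix with real entries $0,1$. Then for all $\boldsymbol{q}^a_1,\boldsymbol{q}^a_2\in\mathcal{Q}^a$ we have $\boldsymbol{q}^a_1\neq\boldsymbol{q}^a_2$ if and only if $\boldsymbol{G}\boldsymbol{q}^a_1\neq\boldsymbol{G}\boldsymbol{q}^a_2$.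
   Context: $\mathbb{F}_2$ denotes the field with two elements; a binary linear source code is given by a generator matrix $\boldsymbol{G}$ over $\mathbb{F}_2$, encoding $\boldsymbol{s}$ as $\boldsymbol{G}\boldsymbol{s}$ (mod 2). *)

(* Defs.v *)
(* Complex numbers: R[i] = complex R for an arbitrary real
   closed field R (covers C = complex over the reals). *)
From HB Require Import structures.
From mathcomp Require Import all_boot all_order all_algebra.
From mathcomp Require Import complex.
Set Implicit Arguments. Unset Strict Implicit. Unset Printing Implicit Defensive.
Import Order.TTheory GRing.Theory Num.Theory.
Local Open Scope ring_scope.

Definition supp_vec (C : numClosedFieldType) (nr : nat) (v : 'cV[C]_nr)
  : 'cV['F_2]_nr := \col_i ((v i 0 != 0)%:R).

Definition supp_set (C : numClosedFieldType) (nr : nat) (Q : 'cV[C]_nr -> Prop)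
  : 'cV['F_2]_nr -> Prop := fun b => exists q, Q q /\ supp_vec q = b.

Definition inclusion_property (nr : nat) (S : 'cV['F_2]_nr -> Prop) : Prop :=
  forall a b : 'cV['F_2]_nr, S a ->
    (forall i, b i 0 != 0 -> a i 0 != 0) -> S b.

Definition mx_F2 (m nr : nat) (G : 'M[bool]_(m, nr)) : 'M['F_2]_(m, nr) :=
  map_mx (fun b : bool => (b : nat)%:R) G.
Definition mx_C (C : numClosedFieldType) (m nr : nat) (G : 'M[bool]_(m, nr))
  : 'M[C]_(m, nr) := map_mx (fun b : bool => (b : nat)%:R) G.

Definition F2_injective_on (m nr : nat) (G : 'M[bool]_(m, nr))
  (S : 'cV['F_2]_nr -> Prop) : Prop :=
  forall a b, S a -> S b -> mx_F2 G *m a = mx_F2 G *m b -> a = b.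

(* Main.v *)
Require Import Defs.
From HB Require Import structures.
From mathcomp Require Import all_boot all_order all_algebra.
From mathcomp Require Import complex.
Import Order.TTheory GRing.Theory Num.Theory.
Set Implicit Arguments. Unset Strict Implicit.
Local Open Scope ring_scope.

Definition emb (R : nzRingType) n k (g : 'I_k -> 'I_n) (x : 'cV[R]_k) : 'cV[R]_n :=
  \col_i \sum_(j | g j == i) x j 0.

Lemma colsub_mul (R : comNzRingType) m n k (g : 'I_k -> 'I_n) (M : 'M[R]_(m,n)) (x : 'cV[R]_k) :
  colsub g M *m x = M *m emb g x.
Proof.
apply/matrixP => r c; rewrite !mxE (ord1 c).
under [RHS]eq_bigr => i _ do rewrite !mxE big_distrr /=.
rewrite [RHS](exchange_big_dep xpredT) //=; apply: eq_bigr => j _.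
by rewrite (big_pred1 (g j)) ?mxE // => i; rewrite /= eq_sym.
Qed.

Lemma emb_inj (R : nzRingType) n k (g : 'I_k -> 'I_n) (x : 'cV[R]_k) :
  injective g -> forall j, emb g x (g j) 0 = x j 0.
Proof.
move=> gi j; rewrite mxE (big_pred1 j) // => j'; by rewrite /= (inj_eq gi).
Qed.

Lemma emb_out (R : nzRingType) n (U : {set 'I_n}) (x : 'cV[R]_#|U|) i :
  i \notin U -> emb (fun j => enum_val j) x i 0 = 0.
Proof.
move=> iU; rewrite mxE big_pred0 // => j; apply/negbTE; apply: contraNneq iU => <-.
exact: enum_valP.
Qed.

Lemma key (C : numClosedFieldType) m n (G : 'M[bool]_(m,n)) (U : {set 'I_n}) :
 (forall y : 'cV['F_2]_n, (forall i, i \notin U -> y i 0 = 0) -> mx_F2 G *m y = 0 -> y = 0) ->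
 forall d : 'cV[C]_n, (forall i, i \notin U -> d i 0 = 0) -> mx_C C G *m d = 0 -> d = 0.
Proof.
move=> HF d dsU Gd.
pose g := fun j : 'I_#|U| => enum_val j.
have gi : injective g by apply: enum_val_inj.
pose A := colsub g (mx_F2 G).
have fA : row_full A.
  rewrite /row_full -mxrank_tr -/(row_free A^T) -kermx_eq0; apply/eqP/row_matrixP => r; rewrite row0.
  have /sub_kermxP K := row_sub r (kermx A^T).
  have : A *m (row r (kermx A^T))^T = 0 by have := congr1 trmx K; rewrite trmx_mul trmxK trmx0.
  rewrite colsub_mul => /HF => H.
  have e := H (fun i iU => emb_out _ iU).
  apply/trmx_inj; rewrite trmx0; apply/matrixP => j c; rewrite (ord1 c).
  by rewrite -(emb_inj _ gi) e !mxE.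
pose h := fullrankfun fA.
have uF := fullrowsub_unit fA.
pose N := rowsub h (colsub g (map_mx (fun b : bool => (b : nat)%:Z) G)).
have eqN : forall R : nzRingType,
   rowsub h (colsub g (map_mx (fun b : bool => (b : nat)%:R) G)) = map_mx (intr : int -> R) N.
  by move=> R; apply/matrixP => i j; rewrite !mxE; case: (G _ _).
have uC : rowsub h (colsub g (mx_C C G)) \in unitmx.
  move: uF; rewrite /A /mx_F2 /mx_C !eqN !unitmxE !det_map_mx !unitfE.
  by apply: contraNneq => /eqP; rewrite intr_eq0 => /eqP ->.
pose dU : 'cV[C]_#|U| := \col_j d (g j) 0.
have edU : emb g dU = d.
  apply/matrixP => i c; rewrite (ord1 c).
  case: (boolP (i \in U)) => iU; last by rewrite emb_out // dsU.
  rewrite -(enum_rankK_in iU iU) -/(g _) emb_inj // mxE.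
  by rewrite /g (enum_rankK_in iU iU).
have : rowsub h (colsub g (mx_C C G)) *m dU = 0.
  by rewrite rowsubE -mulmxA colsub_mul edU Gd mulmx0.
move=> /(congr1 (mulmx (invmx (rowsub h (colsub g (mx_C C G)))))).
rewrite mulKmx // mulmx0 => dU0.
by rewrite -edU dU0; apply/matrixP => i j; rewrite !mxE big1 // => k _; rewrite mxE.
Qed.

Lemma oppF2 p r (v : 'M['F_2]_(p, r)) : - v = v.
Proof. by apply/matrixP => i j; rewrite mxE oppr_pchar2 // pchar_Fp. Qed.

Theorem theorem1 (R : rcfType) (nr m : nat) (Q : 'cV[R[i]]_nr -> Prop)
  (G : 'M[bool]_(m, nr)) :
  (0 < nr)%N ->
  inclusion_property (supp_set Q) ->
  F2_injective_on G (supp_set Q) ->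
  forall q1 q2 : 'cV[R[i]]_nr, Q q1 -> Q q2 ->
    (q1 != q2 <-> mx_C R[i] G *m q1 != mx_C R[i] G *m q2).
Proof.
move=> _ Hinc Hinj q1 q2 Q1 Q2; split; last first.
  by apply: contra_neq => ->.
apply: contra_neq => HG.
pose U := [set i | (q1 i 0 != 0) || (q2 i 0 != 0)].
have S1 : supp_set Q (supp_vec q1) by exists q1.
have S2 : supp_set Q (supp_vec q2) by exists q2.
have HF : forall y : 'cV['F_2]_nr, (forall i, i \notin U -> y i 0 = 0) ->
    mx_F2 G *m y = 0 -> y = 0.
  move=> y yU Gy.
  pose xa : 'cV['F_2]_nr := \col_i (if q1 i 0 != 0 then y i 0 else 0).
  pose xb : 'cV['F_2]_nr := \col_i (if q1 i 0 != 0 then 0 else y i 0).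
  have ey : y = xa + xb.
    by apply/matrixP => i j; rewrite (ord1 j) !mxE; case: ifP; rewrite ?addr0 ?add0r.
  have Sa : supp_set Q xa.
    apply: (Hinc _ _ S1) => i; rewrite !mxE; case: ifP => // -> _; by [].
  have Sb : supp_set Q xb.
    apply: (Hinc _ _ S2) => i; rewrite !mxE; case: ifP => // h1 yi.
    have : i \in U by apply: contraNT yi => /yU ->.
    by rewrite inE h1 /= => ->.
  have eab : xa = xb.
    apply: Hinj => //; apply/eqP; rewrite -subr_eq0 oppF2 -mulmxDr -ey Gy //.
  apply/matrixP => i j; rewrite (ord1 j) [RHS]mxE.
  have := congr1 (fun v : 'cV['F_2]_nr => v i 0) eab; rewrite !mxE.
  by case: ifP => _ // ->.
apply/eqP; rewrite -subr_eq0; apply/eqP.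
apply: (key HF).
  move=> i; rewrite inE negb_or !mxE => /andP[/negPn/eqP -> /negPn/eqP ->].
  by rewrite subr0.
by rewrite mulmxBr HG subrr.
Qed.
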